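(* In the Mahi-Mahi protocol, if an honest validator directly commits some block in a leader slot $s$, then no other honest validator decides to skip the slot $s$ (neither directly nor indirectly).
   Context: Setting: $n=3f+1$ validators, at most $f$ Byzantine; honest validators create exactly one block per round, Byzantine ones may equivocate. Each valid block of round $r$ references (parents) at least $2f+1$ blocks of round $r-1$. Each validator has a local DAG of valid blocks, containing a block only with all its causal history. There is a path from $b$ to $b'$ if $b'$ is reached from $b$ along parent references. A block $b$ of round $r'$ is a vote for a block $L$ of round $r<r'$ with author $a$ if the first block with author $a$ and round $r$ met in the deterministic depth-first search from $b$ is $L$. With wave length $w\in\{4,5\}$, a block of round $r+w-1$ is a certificate for a block $L$ of round $r$ if at least $2f+1$ of its parents are votes for $L$. Leader slots of round $r$ are pairs (validator, $r$) chosen by a global common coin, identical for all validators, totally ordered by round then coin order. A validator classifies slots: direct skip if its local DAG has $2f+1$ blocks of round $r+w-2$ that are not votes for the block $L$ in the slot; direct commit of $L$ if it has $2f+1$ round-$(r+w-1)$ certificates for $L$; otherwise the indirect rule: with anchor the first slot (in slot order) of round $>r+w-1$ not classified as skip, if the anchor is committed with block $A$, commit $L$ if there is a certificate $c$ for $L$ with a path from $A$ to $c$, else skip; if the anchor is undecided, the slot is undecided. *)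

(* Defs.v *)
From mathcomp Require Import all_boot.

(* Data of a protocol execution: validators, the (finite) universe of all
   valid blocks ever created, their author / round / ordered parent list,
   the parameter f (n = 3f+1), the wave length w, and the common-coin
   leader slots of each round (in coin order). *)
Record model := Model {
  validator : finType;
  block : finType;
  author : block -> validator;
  round : block -> nat;
  parents : block -> seq block;
  nf : nat;
  wave : nat;
  leaders : nat -> seq validator }.

Set Implicit Arguments. Unset Strict Implicit. Unset Printing Implicit Defensive.

Section Defs.

(* "at least 2f+1 blocks": blocks from at least 2f+1 distinct validators *)
Definition quorum (M : model) (S : {set block M}) : bool :=
  2 * nf M + 1 <= #|[set author M b | b in S]|.

(* deterministic depth-first search (preorder) from b, following parents in
   order; fuel = round b suffices since rounds decrease along parents.
   The order of first occurrences equals that of a DFS with a visited set. *)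
Fixpoint dfs_from (M : model) (k : nat) (b : block M) : seq (block M) :=
  match k with
  | 0 => [:: b]
  | k'.+1 => b :: flatten [seq @dfs_from M k' p | p <- parents M b]
  end.

Definition dfs (M : model) (b : block M) := @dfs_from M (round M b) b.

Definition first_met (M : model) (b : block M) (a : validator M) (r : nat)
  : option (block M) :=
  ohead [seq x <- @dfs M b | (author M x == a) && (round M x == r)].

Definition is_vote (M : model) (b L : block M) : bool :=
  (round M L < round M b) && (@first_met M b (author M L) (round M L) == Some L).

Definition is_certificate (M : model) (c L : block M) : bool :=
  (round M c == round M L + wave M - 1) &&
  quorum [set p | (p \in parents M c) && @is_vote M p L].

Definition slot_block (M : model) (a : validator M) (r : nat) (L : block M) : bool :=
  (author M L == a) && (round M L == r).

Definition dag_path (M : model) (b b' : block M) : bool :=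
  connect (fun x y => y \in parents M x) b b'.

Definition direct_skip (M : model) (D : {set block M}) (a : validator M) (r : nat) : bool :=
  quorum [set b in D | (round M b == r + wave M - 2) &&
                       [forall L, slot_block a r L ==> ~~ is_vote b L]].

Definition direct_commit (M : model) (D : {set block M}) (a : validator M) (r : nat)
  (L : block M) : bool :=
  slot_block a r L && quorum [set c in D | is_certificate c L].

Inductive status (T : Type) := Skip | Commit of T | Undecided.
Arguments Skip {T}. Arguments Undecided {T}.

Definition slot_lt (M : model) (a1 : validator M) (r1 : nat) (a2 : validator M) (r2 : nat) : bool :=
  (r1 < r2) || ((r1 == r2) && (index a1 (leaders M r1) < index a2 (leaders M r2))).

Definition is_anchor (M : model) (cl : validator M -> nat -> status (block M))
  (r : nat) (a' : validator M) (r' : nat) : Prop :=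
  [/\ r + wave M - 1 < r', a' \in leaders M r', cl a' r' <> Skip &
      forall a'' r'', r + wave M - 1 < r'' -> a'' \in leaders M r'' ->
        slot_lt a'' r'' a' r' -> cl a'' r'' = Skip].

Definition indirect_commit_witness (M : model) (a : validator M) (r : nat)
  (A L : block M) : Prop :=
  slot_block a r L /\ exists c, is_certificate c L /\ dag_path A c.

Definition rule_holds (M : model) (D : {set block M})
  (cl : validator M -> nat -> status (block M)) (a : validator M) (r : nat) : Prop :=
  [/\ direct_skip D a r -> cl a r = Skip,
      ~~ direct_skip D a r -> (exists L, direct_commit D a r L) ->
        exists2 L, direct_commit D a r L & cl a r = Commit L,
      ~~ direct_skip D a r -> ~ (exists L, direct_commit D a r L) ->
        (forall a' r', ~ is_anchor cl r a' r') -> cl a r = Undecided,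
      ~~ direct_skip D a r -> ~ (exists L, direct_commit D a r L) ->
        forall a' r', is_anchor cl r a' r' -> cl a' r' = Undecided -> cl a r = Undecided &
      ~~ direct_skip D a r -> ~ (exists L, direct_commit D a r L) ->
        forall a' r' A, is_anchor cl r a' r' -> cl a' r' = Commit A ->
          ((exists L, indirect_commit_witness a r A L) ->
             exists2 L, indirect_commit_witness a r A L & cl a r = Commit L) /\
          (~ (exists L, indirect_commit_witness a r A L) -> cl a r = Skip)].

Definition classification (M : model) (D : {set block M})
  (cl : validator M -> nat -> status (block M)) : Prop :=
  forall a r, a \in leaders M r -> rule_holds D cl a r.

End Defs.
Arguments Skip {T}. Arguments Undecided {T}.

(* Main.v *)
From Stdlib Require Import Classical.
Require Import Defs.
From mathcomp Require Import all_boot.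
From mathcomp Require Import zify.

Lemma quorum_inter (M : model) (byz : {set validator M}) (S1 S2 : {set block M}) :
  #|validator M| = 3 * nf M + 1 -> #|byz| <= nf M -> quorum S1 -> quorum S2 ->
  exists b1 b2, [/\ b1 \in S1, b2 \in S2, author M b1 = author M b2 &
                    author M b1 \notin byz].
Proof.
move=> HV Hb; rewrite /quorum.
set X := [set author M b | b in S1]; set Y := [set author M b | b in S2].
move=> Q1 Q2.
have : ~~ (X :&: Y \subset byz).
  apply/negP => Hs.
  have h1 := subset_leq_card Hs.
  have h2 := cardsU X Y.
  have h3 : #|X :|: Y| <= #|validator M| by apply: max_card.
  lia.
case/subsetPn => h /setIP [hX hY] hb.
case/imsetP: hX => b1 Hb1 E1; case/imsetP: hY => b2 Hb2 E2.
exists b1, b2; split => //; first by rewrite -E1 -E2.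
by rewrite -E1.
Qed.

Lemma quorum_nonempty (M : model) (S : {set block M}) :
  quorum S -> exists b, b \in S.
Proof.
rewrite /quorum => Q.
have h := leq_imset_card (author M) S.
have : 0 < #|S| by apply: leq_trans h; apply: leq_trans Q; rewrite addn1.
by rewrite card_gt0 => /set0Pn.
Qed.

Theorem lemma4 (M : model) (byz : {set validator M})
  (dag : validator M -> {set block M}) :
  #|validator M| = 3 * nf M + 1 ->
  #|byz| <= nf M ->
  (wave M = 4 \/ wave M = 5) ->
  (* parents of a block of round r are blocks of round r-1 *)
  (forall b p, p \in parents M b -> round M p + 1 = round M b) ->
  (* a block of round r > 0 references 2f+1 (distinct-author) blocks *)
  (forall b, 0 < round M b -> quorum [set p | p \in parents M b]) ->
  (* honest validators create at most one block per round *)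
  (forall b1 b2, author M b1 \notin byz -> author M b1 = author M b2 ->
     round M b1 = round M b2 -> b1 = b2) ->
  (* local DAGs contain the causal history of their blocks *)
  (forall v b p, b \in dag v -> p \in parents M b -> p \in dag v) ->
  (forall r, uniq (leaders M r)) ->
  forall (v v' a : validator M) (r : nat) (L : block M)
         (cl' : validator M -> nat -> status (block M)),
    v \notin byz -> v' \notin byz -> a \in leaders M r ->
    ~~ direct_skip (dag v) a r -> direct_commit (dag v) a r L ->
    classification (dag v') cl' ->
    cl' a r <> Skip.
Proof.
move=> HV Hb Hw Hpar Hq Hhon Hcl Huniq v v' a r L cl' _ _ Ha _ Hdc Hclass.
case/andP: Hdc => Hslot Qc.
have HrL : round M L = r by case/andP: Hslot => _ /eqP.
have Hw4 : 4 <= wave M by case: Hw => ->.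
have Hns : ~~ direct_skip (dag v') a r.
  apply/negP => Hds.
  have [c] := @quorum_nonempty M _ Qc.
  rewrite inE => /andP [_ /andP [/eqP Hrc Qv]].
  have [b1 [p [Hb1 Hp Hauth Hhb]]] := @quorum_inter M byz _ _ HV Hb Hds Qv.
  move: Hb1; rewrite inE => /andP [_ /andP [/eqP Hrb1 /forallP Hall]].
  move: Hp; rewrite inE => /andP [Hpc Hvote].
  have Hrp := Hpar _ _ Hpc.
  have E : b1 = p by apply: Hhon => //; lia.
  by move: (Hall L); rewrite Hslot /= E Hvote.
have Hreach : forall k B, round M B = r + wave M + k ->
    exists c, is_certificate c L /\ dag_path B c.
  elim=> [|k IH] B HB.
    have Qp := Hq B ltac:(lia).
    have [p [c [Hp Hc Hauth Hhb]]] := @quorum_inter M byz _ _ HV Hb Qp Qc.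
    move: Hp; rewrite inE => Hp.
    move: Hc; rewrite inE => /andP [_ Hcert].
    have Hrc : round M c = round M L + wave M - 1 by case/andP: Hcert => /eqP.
    have Hrp := Hpar _ _ Hp.
    have E : p = c by apply: Hhon => //; lia.
    exists c; split => //; rewrite /dag_path; apply: connect1; by rewrite -E.
  have Qp := Hq B ltac:(lia).
  have [p] := @quorum_nonempty M _ Qp; rewrite inE => Hp.
  have Hrp := Hpar _ _ Hp.
  have [c [Hc Hpath]] := IH p ltac:(lia).
  exists c; split => //; rewrite /dag_path.
  apply: connect_trans Hpath; exact: connect1.
have Hrule := Hclass a r Ha.
case: Hrule => R1 R2 R3 R4 R5.
case: (classic (exists L0, direct_commit (dag v') a r L0)) => Hex.
  by have [L0 _ ->] := R2 Hns Hex.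
case: (classic (exists a' r', is_anchor cl' r a' r')) => Han; last first.
  rewrite R3 //; move=> a' r' H; apply: Han; by exists a', r'.
case: Han => a' [r' Hanc].
case Hst: (cl' a' r') => [|A|].
- by case: Hanc => _ _ /(_ Hst).
- have [Hr' Ha' _ _] := Hanc.
  have HrA : round M A = r'.
    case: (Hclass a' r' Ha') => S1 S2 S3 S4 S5.
    case: (boolP (direct_skip (dag v') a' r')) => Hds'.
      by rewrite S1 in Hst.
    case: (classic (exists L0, direct_commit (dag v') a' r' L0)) => Hex'.
      have [L0 HL0 HE] := S2 Hds' Hex'.
      rewrite HE in Hst; case: Hst => <-.
      by case/andP: HL0 => /andP [_ /eqP].
    case: (classic (exists a'' r'', is_anchor cl' r' a'' r'')) => Han'.
      case: Han' => a'' [r'' Hanc'].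
      case Hst': (cl' a'' r'') => [|A'|].
      + by case: Hanc' => _ _ /(_ Hst').
      + have [S5a S5b] := S5 Hds' Hex' a'' r'' A' Hanc' Hst'.
        case: (classic (exists L0, indirect_commit_witness a' r' A' L0)) => Hw'.
          have [L0 [HL0 _] HE] := S5a Hw'.
          rewrite HE in Hst; case: Hst => <-.
          by case/andP: HL0 => _ /eqP.
        by rewrite S5b in Hst.
      + by rewrite (S4 Hds' Hex' a'' r'' Hanc' Hst') in Hst.
    rewrite S3 // in Hst; move=> a'' r'' H; apply: Han'; by exists a'', r''.
  have [R5a _] := R5 Hns Hex a' r' A Hanc Hst.
  have Hwit : exists L0, indirect_commit_witness a r A L0.
    have [c [Hc Hp]] := Hreach (r' - (r + wave M)) A ltac:(lia).
    exists L; split => //; by exists c.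
  by have [L0 _ ->] := R5a Hwit.
- by rewrite (R4 Hns Hex a' r' Hanc Hst).
Qed.
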